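(* Let $P\subset\mathbb{R}^n$ be an $n$-dimensional smooth lattice polytope. Then (1) $\operatorname{codeg}(P)=\operatorname{codeg}_{\mathbb{Q}}(P)=\tau(P)=n+1$ if and only if $P=\Delta_n$; (2) if $P\neq\Delta_n$, then $\operatorname{codeg}_{\mathbb{Q}}(P)\le\tau(P)\le n$.
   Context: $\Delta_n$ denotes the standard $n$-dimensional simplex $\operatorname{Conv}\{0,e_1,\ldots,e_n\}$; lattice polytopes are considered up to lattice (affine unimodular) equivalence. Write $P=\bigcap_{i=1}^r\{x:\langle\rho_i,x\rangle\ge -a_i\}$ with primitive inner facet normals $\rho_i$ and $a_i\in\mathbb{Z}$; $P$ is smooth if each vertex lies on exactly $n$ facet hyperplanes whose normals form a basis of $\mathbb{Z}^n$. $P^{(s)}=\bigcap_i\{\langle\rho_i,x\rangle\ge -a_i+s\}$. For a vertex $m$ with $\{m\}=\bigcap_{i=1}^n\{\langle\rho_i,x\rangle=-a_i\}$, $m(s)$ is defined by $\{m(s)\}=\bigcap_{i=1}^n\{\langle\rho_i,x\rangle=-a_i+s\}$; $P$ is $s$-spanned if $m(s)\in P^{(s)}$ for all vertices $m$. $\operatorname{codeg}(P)=\min\{k\in\mathbb{N}:(kP)^{(1)}\cap\mathbb{Z}^n\ne\emptyset\}$; $\operatorname{codeg}_{\mathbb{Q}}(P)=\inf\{a/b:(aP)^{(b)}\neq\emptyset\}$; $\tau(P)=\inf\{a/b: aP\text{ is }b\text{-spanned}\}$ ($a,b$ positive integers). *)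

(* Defs.v *)
From HB Require Import structures.
From mathcomp Require Import all_boot all_order all_algebra.
From mathcomp Require Import boolp classical_sets reals.
Set Implicit Arguments. Unset Strict Implicit. Unset Printing Implicit Defensive.
Import Order.TTheory GRing.Theory Num.Theory.
Local Open Scope ring_scope.
Local Open Scope classical_set_scope.

(* Points of R^n are row vectors 'rV[R]_n; lattice vectors / facet normals are
   row vectors 'rV[int]_n.  A polytope is given by its facet presentation
   P = \bigcap_{i<r} { x | <rho_i, x> >= - a_i }.                            *)

Definition dotz (R : realType) (n : nat) (v : 'rV[int]_n) (x : 'rV[R]_n) : R :=
  \sum_(j < n) (v 0 j)%:~R * x 0 j.

Definition zpt (R : realType) (n : nat) (z : 'rV[int]_n) : 'rV[R]_n :=
  map_mx (fun k : int => k%:~R) z.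
Arguments zpt R {n} z.

Definition Hpoly (R : realType) (n r : nat) (rho : 'I_r -> 'rV[int]_n)
  (c : 'I_r -> R) : set 'rV[R]_n :=
  [set x | forall i, - c i <= dotz (rho i) x].

(* the facet offsets of the dilation k P shifted by s:
   (kP)^(s) = { x | <rho_i,x> >= - k a_i + s } *)
Definition offs (R : realType) (r : nat) (a : 'I_r -> int) (k s : R) : 'I_r -> R :=
  fun i => k * (a i)%:~R - s.

Definition Ppoly (R : realType) (n r : nat) (rho : 'I_r -> 'rV[int]_n)
  (a : 'I_r -> int) : set 'rV[R]_n := Hpoly rho (offs a 1 0).
Arguments Ppoly R {n r} rho a.

Definition conv (R : realType) (n k : nat) (p : 'I_k -> 'rV[R]_n) : set 'rV[R]_n :=
  [set x | exists l : 'I_k -> R, (forall j, 0 <= l j) /\ \sum_(j < k) l j = 1 /\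
           x = \sum_(j < k) l j *: p j].

Definition vertex (R : realType) (n : nat) (S : set 'rV[R]_n) (m : 'rV[R]_n) : Prop :=
  S m /\ forall x y, S x -> S y -> m = 2^-1 *: (x + y) -> x = y.

Definition primitive (n : nat) (v : 'rV[int]_n) : Prop :=
  forall d : int, (forall j, (d %| v ord0 j)%Z) -> `|d| = 1.

Definition facet_presentation (R : realType) (n r : nat)
  (rho : 'I_r -> 'rV[int]_n) (a : 'I_r -> int) : Prop :=
  (forall i, primitive (rho i)) /\
  (forall i, exists x : 'rV[R]_n,
      (forall j, j != i -> - (a j)%:~R <= dotz (rho j) x) /\
      dotz (rho i) x < - (a i)%:~R).

Definition full_dim (R : realType) (n r : nat) (rho : 'I_r -> 'rV[int]_n)
  (a : 'I_r -> int) : Prop :=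
  exists x : 'rV[R]_n, forall i, - (a i)%:~R < dotz (rho i) x.

Definition lattice_polytope (R : realType) (n : nat) (P : set 'rV[R]_n) : Prop :=
  exists (k : nat) (V : 'I_k -> 'rV[int]_n), P = conv (fun j => zpt R (V j)).

Definition tight (R : realType) (n r : nat) (rho : 'I_r -> 'rV[int]_n)
  (c : 'I_r -> R) (m : 'rV[R]_n) : {set 'I_r} :=
  [set i | dotz (rho i) m == - c i].

Definition Zbasis (n r : nat) (rho : 'I_r -> 'rV[int]_n) (T : {set 'I_r}) : Prop :=
  (forall v : 'rV[int]_n, exists l : 'I_r -> int, v = \sum_(i in T) l i *: rho i) /\
  (forall l : 'I_r -> int, \sum_(i in T) l i *: rho i = 0 -> forall i, i \in T -> l i = 0).

Definition smooth (R : realType) (n r : nat) (rho : 'I_r -> 'rV[int]_n)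
  (a : 'I_r -> int) : Prop :=
  forall m, vertex (Ppoly R rho a) m ->
    #|tight rho (offs a 1 0) m| = n /\ Zbasis rho (tight rho (offs a 1 0) m).

(* the polytope with offsets c (facet presentation (rho,c)) is s-spanned:
   for every vertex m, the point m(s) (the solution of <rho_i,y> = -c_i + s for
   the facets i through m) lies in the shifted polytope { <rho_i,y> >= -c_i+s } *)
Definition spanned (R : realType) (n r : nat) (rho : 'I_r -> 'rV[int]_n)
  (c : 'I_r -> R) (s : R) : Prop :=
  forall m, vertex (Hpoly rho c) m ->
    forall y : 'rV[R]_n,
      (forall i, i \in tight rho c m -> dotz (rho i) y = - c i + s) ->
      Hpoly rho (fun i => c i - s) y.

Definition codeg (R : realType) (n r : nat) (rho : 'I_r -> 'rV[int]_n)
  (a : 'I_r -> int) : R :=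
  inf [set q : R | exists k : nat, q = k%:R /\
        exists z : 'rV[int]_n, Hpoly rho (offs a k%:R 1) (zpt R z)].

Definition codegQ (R : realType) (n r : nat) (rho : 'I_r -> 'rV[int]_n)
  (a : 'I_r -> int) : R :=
  inf [set q : R | exists p b : nat, (0 < p)%N /\ (0 < b)%N /\ q = p%:R / b%:R /\
        exists x : 'rV[R]_n, Hpoly rho (offs a p%:R b%:R) x].

Definition tau (R : realType) (n r : nat) (rho : 'I_r -> 'rV[int]_n)
  (a : 'I_r -> int) : R :=
  inf [set q : R | exists p b : nat, (0 < p)%N /\ (0 < b)%N /\ q = p%:R / b%:R /\
        spanned rho (offs a (p%:R : R) 0) (b%:R : R)].

(* standard simplex Delta_n = Conv{0, e_1, ..., e_n} *)
Definition simplex_pts (R : realType) (n : nat) (j : 'I_n.+1) : 'rV[R]_n :=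
  match unlift ord0 j with
  | None => 0
  | Some i => delta_mx 0 i
  end.

Definition simplex (R : realType) (n : nat) : set 'rV[R]_n := conv (@simplex_pts R n).
Arguments simplex R n : clear implicits.

Definition lattice_equiv (R : realType) (n : nat) (P Q : set 'rV[R]_n) : Prop :=
  exists (U : 'M[int]_n) (t : 'rV[int]_n), U \in unitmx /\
    [set x *m map_mx (fun k : int => k%:~R) U + zpt R t | x in P] = Q.

Arguments facet_presentation R {n r} rho a.
Arguments full_dim R {n r} rho a.
Arguments smooth R {n r} rho a.
Arguments codeg R {n r} rho a.
Arguments codegQ R {n r} rho a.
Arguments tau R {n r} rho a.

(* Main.v *)
Require Import Defs.
From HB Require Import structures.
From mathcomp Require Import all_boot all_order all_algebra.
From mathcomp Require Import boolp classical_sets reals.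
From mathcomp Require Import ring lra zify.
From Stdlib Require Import Lia.
Import Order.TTheory GRing.Theory Num.Theory.
Local Open Scope ring_scope.
Set Implicit Arguments. Unset Strict Implicit. Unset Printing Implicit Defensive.


Section Dot.
Variable R : realType.
Variable n : nat.
Implicit Types (v w : 'rV[int]_n) (x y : 'rV[R]_n).

Definition dzz v w : int := \sum_(j < n) v 0 j * w 0 j.

Lemma dotzD v x y : dotz v (x + y) = dotz v x + dotz v y.
Proof. by rewrite /dotz -big_split; apply eq_bigr => j _; rewrite mxE mulrDr. Qed.
Lemma dotz0 v : dotz v (0 : 'rV[R]_n) = 0.
Proof. by rewrite /dotz big1 // => j _; rewrite mxE mulr0. Qed.
Lemma dotzZ v c x : dotz v (c *: x) = c * dotz v x.
Proof. by rewrite /dotz mulr_sumr; apply eq_bigr => j _; rewrite mxE mulrCA. Qed.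
Lemma dotzN v x : dotz v (- x) = - dotz v x.
Proof. by rewrite -scaleN1r dotzZ mulN1r. Qed.
Lemma dotzB v x y : dotz v (x - y) = dotz v x - dotz v y.
Proof. by rewrite dotzD dotzN. Qed.
Lemma dotz_sum v (I : finType) (P : pred I) (F : I -> 'rV[R]_n) :
  dotz v (\sum_(i | P i) F i) = \sum_(i | P i) dotz v (F i).
Proof. exact: (big_morph (dotz v) (dotzD v) (dotz0 v)). Qed.
Lemma dotz_zpt v w : dotz v (zpt R w) = (dzz v w)%:~R.
Proof. by rewrite /dotz /dzz rmorph_sum; apply eq_bigr => j _; rewrite mxE /= intrM. Qed.
Lemma dotzDl v w x : dotz (v + w) x = dotz v x + dotz w x.
Proof. by rewrite /dotz -big_split; apply eq_bigr => j _; rewrite mxE intrD mulrDl. Qed.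
Lemma dotz0l x : dotz (0 : 'rV[int]_n) x = 0.
Proof. by rewrite /dotz big1 // => j _; rewrite mxE mul0r. Qed.
Lemma dotzZl (k : int) v x : dotz (k *: v) x = k%:~R * dotz v x.
Proof. by rewrite /dotz mulr_sumr; apply eq_bigr => j _; rewrite mxE intrM mulrA. Qed.
Lemma dotz_suml (I : finType) (P : pred I) (F : I -> 'rV[int]_n) x :
  dotz (\sum_(i | P i) F i) x = \sum_(i | P i) dotz (F i) x.
Proof. by apply: (big_ind2 (fun a b => dotz a x = b)) => [|? ? ? ? <- <-|]; rewrite ?dotz0l ?dotzDl. Qed.

Lemma zptD v w : zpt R (v + w) = zpt R v + zpt R w.
Proof. by apply/matrixP => i j; rewrite !mxE intrD. Qed.
Lemma zptZ (k : int) v : zpt R (k *: v) = k%:~R *: zpt R v.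
Proof. by apply/matrixP => i j; rewrite !mxE intrM. Qed.
Lemma zpt0 : zpt R (0 : 'rV[int]_n) = 0.
Proof. by apply/matrixP => i j; rewrite !mxE. Qed.
Lemma zpt_sum (I : finType) (P : pred I) (F : I -> 'rV[int]_n) :
  zpt R (\sum_(i | P i) F i) = \sum_(i | P i) zpt R (F i).
Proof. exact: (big_morph (zpt R) zptD zpt0). Qed.

Lemma dzzDl v v' w : dzz (v + v') w = dzz v w + dzz v' w.
Proof. by rewrite /dzz -big_split; apply eq_bigr => j _; rewrite mxE mulrDl. Qed.
Lemma dzzZl k v w : dzz (k *: v) w = k * dzz v w.
Proof. by rewrite /dzz mulr_sumr; apply eq_bigr => j _; rewrite mxE mulrA. Qed.
Lemma dzz0l w : dzz 0 w = 0.
Proof. by rewrite /dzz big1 // => j _; rewrite mxE mul0r. Qed.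
Lemma dzz_suml (I : finType) (P : pred I) (F : I -> 'rV[int]_n) w :
  dzz (\sum_(i | P i) F i) w = \sum_(i | P i) dzz (F i) w.
Proof. by apply: (big_ind2 (fun a b => dzz a w = b)) => [|? ? ? ? <- <-|]; rewrite ?dzz0l ?dzzDl. Qed.
End Dot.


Lemma dual_basis (R : realType) (n r : nat) (rho : 'I_r -> 'rV[int]_n) (T : {set 'I_r}) :
  Zbasis rho T -> exists u : 'I_r -> 'rV[int]_n,
  (forall s t, s \in T -> t \in T -> dzz (rho s) (u t) = (s == t)%:R) /\
  (forall x : 'rV[R]_n, x = \sum_(t in T) dotz (rho t) x *: zpt R (u t)) /\
  (forall v, v = \sum_(t in T) dzz v (u t) *: rho t).
Proof.
case=> Hspan Hind.
have [L HL] : exists L : 'I_n -> 'I_r -> int,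
    forall k, delta_mx 0 k = \sum_(i in T) L k i *: rho i.
  exact: (fin_all_exists (fun k => Hspan (delta_mx 0 k))).
pose u t : 'rV[int]_n := \row_k L k t.
have HLe k j : (delta_mx 0 k : 'rV[int]_n) 0 j = \sum_(i in T) L k i * rho i 0 j.
  by rewrite (HL k) summxE; apply eq_bigr => i _; rewrite mxE.
have Hd : forall s t, s \in T -> t \in T -> dzz (rho s) (u t) = (s == t)%:R.
  move=> s t sT tT.
  pose l i := dzz (rho s) (u i) - (s == i)%:R.
  have H0 : \sum_(i in T) l i *: rho i = 0.
    rewrite /l.
    under eq_bigr do rewrite scalerBl.
    rewrite sumrB.
    have -> : \sum_(i in T) (s == i)%:R *: rho i = rho s.
      rewrite (bigD1 s) //= eqxx scale1r big1 ?addr0 // => i /andP[_ ni].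
      by rewrite eq_sym (negbTE ni) scale0r.
    apply/eqP; rewrite subr_eq0; apply/eqP.
    rewrite [in RHS](row_sum_delta (rho s)).
    under [in RHS]eq_bigr do rewrite HL scaler_sumr.
    rewrite exchange_big /=; apply eq_bigr => i _.
    rewrite /dzz scaler_suml; apply eq_bigr => k _.
    by rewrite mxE scalerA.
  have := Hind l H0 t tT; rewrite /l => /eqP; rewrite subr_eq0 => /eqP.
  done.
exists u; split => //; split.
  move=> x; apply/matrixP => i k; rewrite (ord1 i) summxE.
  under eq_bigr do rewrite !mxE.
  rewrite /dotz.
  under eq_bigr do rewrite mulr_suml.
  rewrite exchange_big /=.
  have Hc j : \sum_(t in T) (rho t 0 j)%:~R * (u t 0 k)%:~R = ((j == k)%:R : R).
    have H1 := congr1 (fun z : int => (z%:~R : R)) (HLe k j).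
    move: H1; rewrite /= mxE eqxx /= eq_sym rmorph_nat rmorph_sum => ->.
    apply eq_bigr => t _; rewrite mxE /= intrM mulrC //.
  transitivity (\sum_(j < n) x 0 j * (j == k)%:R).
    rewrite (bigD1 k) //= eqxx mulr1 big1 ?addr0 // => j /negbTE->.
    by rewrite mulr0.
  apply eq_bigr => j _; rewrite -(Hc j) mulr_sumr; apply eq_bigr => t _.
  by rewrite mxE mulrCA mulrA.
move=> v; have [l ->] := Hspan v.
apply eq_bigr => t tT; congr (_ *: _).
rewrite dzz_suml (bigD1 t) //= dzzZl Hd // eqxx mulr1 big1 ?addr0 // => i /andP[iT ni].
by rewrite dzzZl Hd // (negbTE ni) mulr0.
Qed.


Section Conv.
Variable R : realType.
Variables n k : nat.
Variable p : 'I_k -> 'rV[R]_n.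

Lemma conv_pert (l d : 'I_k -> R) (c : R) :
  \sum_i l i = 1 -> \sum_i d i = 0 -> (forall i, 0 <= l i + c * d i) ->
  conv p (\sum_i l i *: p i + c *: \sum_i d i *: p i).
Proof.
move=> l1 d0 H; exists (fun i => l i + c * d i); split => //; split.
  by rewrite big_split /= -mulr_sumr d0 mulr0 addr0.
rewrite scaler_sumr -big_split; apply eq_bigr => i _.
by rewrite scalerDl scalerA.
Qed.

Lemma conv_vertex_gen m : vertex (conv p) m -> exists j, m = p j.
Proof.
case=> [[l [l0 [l1 mE]]] Hv].
have [j lj] : exists j, 0 < l j.
  case: (pickP (fun j => 0 < l j)) => [j Hj|H]; first by exists j.
  exfalso; move: l1; rewrite big1; first by move/esym/eqP; rewrite oner_eq0.
  by move=> i _; have := l0 i; rewrite le_eqVlt H orbF => /eqP <-.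
have lj1 : l j <= 1.
  by rewrite -l1 (bigD1 j) //= lerDl sumr_ge0 // => i _; exact: l0.
pose d i := (i == j)%:R - l i.
have d0 : \sum_i d i = 0.
  rewrite /d sumrB l1 (bigD1 j) //= eqxx big1 ?addr0 ?subrr // => i /negbTE ->.
  by [].
have dE : \sum_i d i *: p i = p j - m.
  rewrite mE /d; under eq_bigr do rewrite scalerBl.
  rewrite sumrB (bigD1 j) //= eqxx scale1r big1 ?addr0 // => i /negbTE ->.
  by rewrite scale0r.
have Hp := @conv_pert l d (l j) l1 d0.
have Hm := @conv_pert l d (- l j) l1 d0.
have Cp : conv p (\sum_i l i *: p i + l j *: \sum_i d i *: p i).
  apply: Hp => i; rewrite /d; case: eqP => [->|_].
    by rewrite /= mulrBr mulr1; nra.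
  by have := l0 i; rewrite /= mulrBr mulr0 add0r; nra.
have Cm : conv p (\sum_i l i *: p i + (- l j) *: \sum_i d i *: p i).
  apply: Hm => i; rewrite /d; case: eqP => [->|_].
    by rewrite /= mulrBr mulr1; nra.
  by have := l0 i; rewrite /= mulrBr mulr0 add0r; nra.
rewrite -mE dE in Cp Cm.
have Hmid : m = 2^-1 *: (m + l j *: (p j - m) + (m + - l j *: (p j - m))).
  by apply/matrixP => i0 j0; rewrite !mxE; field.
have := Hv _ _ Cp Cm Hmid; move/eqP; rewrite -subr_eq0 scaleNr opprD opprK addrACA subrr add0r.
rewrite -scalerDr scaler_eq0 (gt_eqF lj) /= -mulr2n -scaler_nat scaler_eq0.
by rewrite pnatr_eq0 /= subr_eq0 => /eqP <-; exists j.
Qed.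

Lemma conv_dotz_bound (v : 'rV[int]_n) : exists K, forall x, conv p x -> dotz v x <= K.
Proof.
exists (\sum_j `|dotz v (p j)|) => x [l [l0 [l1 ->]]].
rewrite dotz_sum -[X in _ <= X]mul1r -l1 mulr_suml; apply: ler_sum => j _.
rewrite dotzZ ler_wpM2l //; apply: le_trans (ler_norm _) _.
by rewrite (bigD1 j) //= lerDl sumr_ge0.
Qed.

Definition nsq (y : 'rV[R]_n) := \sum_i (y 0 i) ^+ 2.

Lemma jensen2 (l y : 'I_k -> R) : (forall j, 0 <= l j) -> \sum_j l j = 1 ->
  (\sum_j l j * y j) ^+ 2 <= \sum_j l j * y j ^+ 2.
Proof.
move=> l0 l1; set c := \sum_j l j * y j.
have H : 0 <= \sum_j l j * (y j - c) ^+ 2.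
  by apply: sumr_ge0 => j _; rewrite mulr_ge0 // sqr_ge0.
have E : forall c, \sum_j l j * (y j - c) ^+ 2 =
   \sum_j l j * y j ^+ 2 - (2 * c) * \sum_j l j * y j + c ^+ 2 * \sum_j l j.
  move=> c'; rewrite !mulr_sumr -sumrB -big_split; apply eq_bigr => j _ /=; ring.
move: H; rewrite E -/c l1; lra.
Qed.

Lemma conv_nsq x m : conv p x -> (forall j, nsq (p j) <= nsq m) -> nsq x <= nsq m.
Proof.
move=> [l [l0 [l1 ->]]] H.
apply: (@le_trans _ _ (\sum_j l j * nsq (p j))).
  rewrite /nsq; under eq_bigr do rewrite summxE.
  under [X in _ <= X]eq_bigr do rewrite mulr_sumr.
  rewrite [X in _ <= X]exchange_big /=; apply: ler_sum => i _.
  under eq_bigr do rewrite mxE.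
  exact: jensen2.
rewrite -[X in _ <= X]mul1r -l1 mulr_suml; apply: ler_sum => j _.
by rewrite ler_wpM2l.
Qed.

Lemma conv_vertex_exists : (0 < k)%N -> exists m, vertex (conv p) m.
Proof.
move=> k0; pose i0 : 'I_k := Ordinal k0.
case: (@arg_maxP _ _ _ i0 xpredT (fun j => nsq (p j)) isT) => js _ Hjs.
exists (p js); split.
  exists (fun j => (j == js)%:R); split; first by move=> j; rewrite ler0n.
  split; first by rewrite (bigD1 js) //= eqxx big1 ?addr0 // => j /negbTE ->.
  rewrite (bigD1 js) //= eqxx scale1r big1 ?addr0 // => j /negbTE ->.
  by rewrite scale0r.
move=> x y Cx Cy Hm.
have Nx := conv_nsq Cx (fun j => Hjs j isT).
have Ny := conv_nsq Cy (fun j => Hjs j isT).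
have E : nsq (x - y) = 2 * (nsq x + nsq y) - 4 * nsq (p js).
  have E1 : nsq (x - y) = \sum_i (2 * (x 0 i ^+ 2 + y 0 i ^+ 2) - 4 * (p js 0 i) ^+ 2).
    by apply eq_bigr => i _; rewrite Hm !mxE; field.
  by rewrite E1 sumrB -!mulr_sumr big_split.
have N0 : nsq (x - y) <= 0 by rewrite E; lra.
have N0' : nsq (x - y) = 0.
  by apply/eqP; rewrite eq_le N0 sumr_ge0 // => i _; rewrite sqr_ge0.
apply/eqP; rewrite -subr_eq0; apply/eqP/matrixP => i j; rewrite (ord1 i) mxE.
move: N0'; rewrite /nsq => /eqP; rewrite psumr_eq0 => [/allP H|j' _]; last by rewrite sqr_ge0.
by have := H j (mem_index_enum _); rewrite /= sqrf_eq0 !mxE => /eqP.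
Qed.
End Conv.


Lemma simplexE (R : realType) (n : nat) (z : 'rV[R]_n) :
  simplex R n z <-> (forall k, 0 <= z 0 k) /\ \sum_k z 0 k <= 1.
Proof.
split.
  case=> l [l0 [l1 ->]].
  have co k : (\sum_j l j *: @simplex_pts R n j) 0 k = l (lift ord0 k).
    rewrite summxE big_ord_recl /simplex_pts unlift_none scaler0 mxE add0r.
    rewrite (bigD1 k) //= liftK !mxE !eqxx mulr1 big1 ?addr0 // => j /negbTE jk.
    by rewrite liftK !mxE eq_sym jk mulr0.
  split => [k|]; first by rewrite co.
  under eq_bigr do rewrite co.
  move: l1; rewrite big_ord_recl => <-; rewrite lerDr; exact: l0.
case=> z0 z1.
exists (fun j => match unlift ord0 j with None => 1 - \sum_k z 0 k | Some k => z 0 k end).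
split; first by move=> j; case: unliftP => [k|] _ //; rewrite subr_ge0.
split; first by rewrite big_ord_recl unlift_none [X in _ + X](eq_bigr (fun i => z 0 i)) ?subrK // => i _; rewrite liftK.
rewrite big_ord_recl /simplex_pts unlift_none scaler0 add0r.
rewrite (eq_bigr (fun i => z 0 i *: delta_mx 0 i)) -?row_sum_delta // => i _.
by rewrite liftK.
Qed.

Lemma sum_cast (V : nmodType) N n' (e : N = n') (G : 'I_N -> V) :
  \sum_(i < N) G i = \sum_(k < n') G (cast_ord (esym e) k).
Proof. by subst; apply eq_bigr => k _; rewrite cast_ord_id. Qed.

Section Main.
Variable R : realType.
Variables n r : nat.
Variable rho : 'I_r -> 'rV[int]_n.
Variable a : 'I_r -> int.
Hypothesis Hlat : lattice_polytope (Ppoly R rho a).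
Hypothesis Hsm : smooth R rho a.
Hypothesis Hprim : forall i, primitive (rho i).

Local Notation P := (Ppoly R rho a).
Definition fv i (x : 'rV[R]_n) := dotz (rho i) x + (a i)%:~R.
Definition TT (m : 'rV[R]_n) := tight rho (offs a 1 0) m.

Lemma PE x : P x <-> forall i, 0 <= fv i x.
Proof.
rewrite /Ppoly /Hpoly /fv /offs /=; split => H i; have := H i; rewrite mul1r subr0; lra.
Qed.

Lemma inT m i : (i \in TT m) = (fv i m == 0).
Proof. by rewrite inE /fv /offs mul1r subr0 addr_eq0. Qed.

Lemma fvD i x y : fv i (x + y) = fv i x + dotz (rho i) y.
Proof. by rewrite /fv dotzD addrAC. Qed.

Lemma fvB i x y : dotz (rho i) (x - y) = fv i x - fv i y.
Proof. by rewrite /fv dotzB opprD addrACA subrr addr0. Qed.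

Lemma vertex_lattice m : vertex P m -> exists M, m = zpt R M.
Proof.
case: Hlat => k [V PE']; rewrite PE' => /conv_vertex_gen [j ->].
by exists (V j).
Qed.

Definition vs m (M : 'rV[int]_n) (u : 'I_r -> 'rV[int]_n) : Prop :=
  [/\ vertex P m, m = zpt R M, #|TT m| = n,
  (forall s t, s \in TT m -> t \in TT m -> dzz (rho s) (u t) = (s == t)%:R) &
  (forall x : 'rV[R]_n, x = \sum_(t in TT m) dotz (rho t) x *: zpt R (u t)) /\
  (forall v, v = \sum_(t in TT m) dzz v (u t) *: rho t) /\
  (forall i t, t \in TT m -> 0 <= dzz (rho i) M + a i + dzz (rho i) (u t))].

Lemma fv_zpt i M : fv i (zpt R M) = (dzz (rho i) M + a i)%:~R.
Proof. by rewrite /fv dotz_zpt intrD. Qed.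

Lemma vertex_struct m : vertex P m -> exists M u, vs m M u.
Proof.
move=> Vm; have [M mE] := vertex_lattice Vm.
have [cardT ZB] := Hsm Vm.
have [u [Hd [Hx Hv]]] := dual_basis R ZB.
exists M, u; split => //; split => //; split => // i t tT.
have Pm : P m by case: Vm.
set D := fun i => dzz (rho i) M + a i.
set c := fun i => dzz (rho i) (u t).
have D0 j : 0 <= D j.
  by have := (PE m).1 Pm j; rewrite mE fv_zpt ler0z.
have DT j : (j \in TT m) = (D j == 0).
  by rewrite inT mE fv_zpt intr_eq0.
apply/negP => /negP; rewrite -ltNge => Hneg.
have ci : c i < 0.
  rewrite ltNge; apply/negP => ci; move: Hneg; rewrite ltNge.
  by rewrite -/(D i) -/(c i) addr_ge0.
pose F j : R := (D j)%:~R / (- c j)%:~R.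
case: (@arg_minP _ _ _ i (fun j => c j < 0) F ci) => i0 ci0 Hmin.
set ts := F i0.
have Di0 : 0 < D i0.
  rewrite lt_def D0 andbT -DT; apply/negP => i0T.
  by move: ci0; rewrite /c Hd // ltNge; case: (i0 == t).
have ts_pos : 0 < ts by rewrite /ts /F divr_gt0 // ?ltr0z // oppr_gt0.
have key j : 0 <= (D j)%:~R + ts * (c j)%:~R.
  case: (ltP (c j) 0) => cj.
    have H : ts <= (D j)%:~R / (- c j)%:~R := Hmin j cj.
    have cjR : 0 < ((- c j)%:~R : R) by rewrite ltr0z oppr_gt0.
    move: H; rewrite ler_pdivlMr // intrN; nra.
  have : (0 : R) <= (D j)%:~R by rewrite ler0z.
  have : (0 : R) <= (c j)%:~R by rewrite ler0z.
  nra.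
have keyi0 : (D i0)%:~R + ts * (c i0)%:~R = 0 :> R.
  have cR : ((- c i0)%:~R : R) != 0 by rewrite intr_eq0 oppr_eq0 ltr0_neq0.
  have cR' : ((c i0)%:~R : R) != 0 by rewrite intr_eq0 ltr0_neq0.
  by rewrite /ts /F intrN; field.
set e := m + ts *: zpt R (u t).
have fve j : fv j e = (D j)%:~R + ts * (c j)%:~R.
  by rewrite /e fvD mE fv_zpt dotzZ dotz_zpt.
have Pe : P e by apply/PE => j; rewrite fve.
have DTt s : s \in TT m -> D s = 0 by rewrite DT => /eqP.
have fvm s : s \in TT m -> fv s m = 0 by rewrite inT => /eqP.
have line z : fv i0 z = 0 -> (forall s, s \in TT m -> s != t -> fv s z = 0) -> z = e.
  move=> H0 Hs.
  have Ez : z - m = fv t z *: zpt R (u t).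
    rewrite [LHS]Hx (bigD1 t) //= big1 ?addr0.
      by rewrite fvB fvm // subr0.
    by move=> s /andP[sT st]; rewrite fvB Hs // fvm // subrr scale0r.
  have Hz : z = m + fv t z *: zpt R (u t) by rewrite -Ez addrC subrK.
  move: H0; rewrite Hz fvD mE fv_zpt dotzZ dotz_zpt -/(D i0) -/(c i0) => H0.
  have cR' : ((c i0)%:~R : R) != 0 by rewrite intr_eq0 ltr0_neq0.
  have : (fv t z - ts) * (c i0)%:~R = 0 by rewrite mulrBl; lra.
  move/eqP; rewrite mulf_eq0 (negbTE cR') orbF subr_eq0 => /eqP ->.
  by rewrite -mE.
have Ve : vertex P e.
  split => // x y Px Py Hm.
  have fmid j : fv j e = 2^-1 * (fv j x + fv j y).
    by rewrite Hm /fv dotzZ dotzD; field.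
  have zero j : fv j e = 0 -> fv j x = 0 /\ fv j y = 0.
    rewrite fmid => H.
    have := (PE x).1 Px j; have := (PE y).1 Py j; move=> hy hx; split; lra.
  have e0 : fv i0 e = 0 by rewrite fve.
  have es s : s \in TT m -> s != t -> fv s e = 0.
    move=> sT st; rewrite fve DTt // /c Hd // (negbTE st) mulr0 add0r.
    by [].
  have -> : x = e.
    apply: line; first by case: (zero _ e0).
    by move=> s sT st; case: (zero _ (es s sT st)).
  apply/esym/line; first by case: (zero _ e0).
  by move=> s sT st; case: (zero _ (es s sT st)).
have [E eE] := vertex_lattice Ve.
have tsE : ts = (dzz (rho t) E + a t)%:~R.
  by rewrite -fv_zpt -eE fve DTt // /c Hd // eqxx add0r mulr1.
have ts1 : 1 <= ts.
  move: ts_pos; rewrite tsE ltr0z => H; rewrite ler1z.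
  by [].
have := key i; move: Hneg; rewrite -/(D i) -/(c i) -(ltrz0 R) intrD.
have : ((c i)%:~R : R) < 0 by rewrite ltrz0.
nra.
Qed.

Lemma scaleP (p : R) z : 0 < p -> (Hpoly rho (offs a p 0) z <-> P (p^-1 *: z)).
Proof.
move=> p0; rewrite PE /Hpoly /offs /fv /=.
have pi : p^-1 * p = 1 by rewrite mulVf // gt_eqF.
split => H i; have := H i; rewrite dotzZ.
  have pn : p != 0 by rewrite gt_eqF.
  move=> h; have -> : p^-1 * dotz (rho i) z + (a i)%:~R = p^-1 * (dotz (rho i) z + p * (a i)%:~R).
    by field.
  by apply: mulr_ge0; [rewrite invr_ge0 ltW | move: h; rewrite subr0; lra].
move=> h; have : 0 <= p * (p^-1 * dotz (rho i) z + (a i)%:~R) by apply: mulr_ge0; [exact: ltW | exact: h].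
by rewrite mulrDr mulrA mulfV ?gt_eqF // mul1r subr0; lra.
Qed.

Lemma vertex_scale_down (p : R) m' : 0 < p ->
  vertex (Hpoly rho (offs a p 0)) m' -> vertex P (p^-1 *: m').
Proof.
move=> p0 [Pm' Hv]; split; first by apply/(scaleP _ p0).
move=> x y Px Py Hm.
have px : Hpoly rho (offs a p 0) (p *: x) by apply/(scaleP _ p0); rewrite scalerA mulVf ?gt_eqF ?scale1r.
have py : Hpoly rho (offs a p 0) (p *: y) by apply/(scaleP _ p0); rewrite scalerA mulVf ?gt_eqF ?scale1r.
have : p *: x = p *: y.
  apply: Hv => //; rewrite -scalerDr scalerA mulrC -scalerA -Hm scalerA.
  by rewrite mulfV ?gt_eqF ?scale1r.
by move/(congr1 (fun z => p^-1 *: z)); rewrite !scalerA mulVf ?gt_eqF ?scale1r.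
Qed.

Lemma vertex_scale_up (p : R) m : 0 < p ->
  vertex P m -> vertex (Hpoly rho (offs a p 0)) (p *: m).
Proof.
move=> p0 [Pm Hv]; have pn : p != 0 by rewrite gt_eqF.
split; first by apply/(scaleP _ p0); rewrite scalerA mulVf ?scale1r.
move=> x y Px Py Hm.
have : p^-1 *: x = p^-1 *: y.
  apply: Hv; [exact/(scaleP _ p0) | exact/(scaleP _ p0) |].
  rewrite -scalerDr scalerA mulrC -scalerA -Hm scalerA.
  by rewrite mulVf ?scale1r.
by move/(congr1 (fun z => p *: z)); rewrite !scalerA mulfV ?scale1r.
Qed.

Lemma tight_scale (p : R) m i : 0 < p ->
  (i \in tight rho (offs a p 0) (p *: m)) = (i \in TT m).
Proof.
move=> p0; rewrite !inE /offs dotzZ mul1r !subr0 -mulrN.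
by rewrite (inj_eq (mulfI _)) // gt_eqF.
Qed.


Definition ystar m (u : 'I_r -> 'rV[int]_n) (p b : R) :=
  p *: m + b *: \sum_(t in TT m) zpt R (u t).

Lemma ystar_dot m M u (p b : R) i : vs m M u ->
  dotz (rho i) (ystar m u p b) =
  p * (dzz (rho i) M)%:~R + b * (\sum_(t in TT m) dzz (rho i) (u t))%:~R.
Proof.
case=> _ mE _ _ _; rewrite /ystar dotzD !dotzZ dotz_sum mE dotz_zpt rmorph_sum.
by congr (_ + _ * _); rewrite rmorph_sum; apply eq_bigr => t _; rewrite dotz_zpt.
Qed.

Lemma vs_fv0 m M u t : vs m M u -> t \in TT m -> dotz (rho t) m = - (a t)%:~R.
Proof. by move=> _; rewrite inT /fv addr_eq0 => /eqP. Qed.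

Lemma y_unique m M u (p b : R) y : vs m M u ->
  (forall t, t \in TT m -> dotz (rho t) y = - offs a p 0 t + b) ->
  y = ystar m u p b.
Proof.
move=> V Hy; have [_ _ _ _ [Hx _]] := V.
rewrite /ystar -[y](subrK (p *: m)) addrC; congr (_ + _).
rewrite [LHS]Hx scaler_sumr; apply eq_bigr => t tT.
by rewrite dotzB dotzZ Hy // (vs_fv0 V tT) /offs subr0 mulrN opprK; congr (_ *: _); ring.
Qed.

Lemma spanned_suff (p b : R) : 0 < p ->
  (forall m M u, vs m M u -> forall i,
     b <= p * (dzz (rho i) M + a i)%:~R + b * (\sum_(t in TT m) dzz (rho i) (u t))%:~R) ->
  spanned rho (offs a p 0) b.
Proof.
move=> p0 H m' Vm' y Hy.
have Vm := vertex_scale_down p0 Vm'.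
have [M [u V]] := vertex_struct Vm.
have m'E : m' = p *: (p^-1 *: m') by rewrite scalerA mulfV ?gt_eqF ?scale1r.
have Hy' : forall t, t \in TT (p^-1 *: m') -> dotz (rho t) y = - offs a p 0 t + b.
  by move=> t tT; apply: Hy; rewrite m'E tight_scale.
have := y_unique V Hy' => ->.
move=> i; have := H _ _ _ V i.
rewrite /= (ystar_dot _ _ _ V) /offs intrD; lra.
Qed.

Lemma spanned_nec (p b : R) m M u : 0 < p -> spanned rho (offs a p 0) b -> vs m M u ->
  Hpoly rho (offs a p b) (ystar m u p b).
Proof.
move=> p0 S V; have [Vm _ _ _ _] := V.
have := S _ (vertex_scale_up p0 Vm) (ystar m u p b).
have Hy : forall i, i \in tight rho (offs a p 0) (p *: m) ->
    dotz (rho i) (ystar m u p b) = - offs a p 0 i + b.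
  move=> i; rewrite tight_scale // => iT; rewrite (ystar_dot _ _ _ V).
  have [_ mE _ Hd _] := V.
  rewrite (eq_bigr (fun t => (i == t)%:R)) => [|t tT]; last by rewrite Hd.
  rewrite (bigD1 i) //= eqxx big1 ?addr0; last first.
    by move=> t /andP[_ ti]; rewrite eq_sym (negbTE ti).
  have := vs_fv0 V iT; rewrite mE dotz_zpt => ->.
  by rewrite /offs subr0 mulr1 mulrN.
move=> /(_ Hy) H i; have := H i; rewrite /offs subr0.
by [].
Qed.


Definition DD (M : 'rV[int]_n) i := dzz (rho i) M + a i.
Definition bad m M (u : 'I_r -> 'rV[int]_n) i :=
  forall t, t \in TT m -> dzz (rho i) (u t) = - DD M i.

Lemma vs_D0 m M u i : vs m M u -> 0 <= DD M i.
Proof.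
case=> [[Pm _] mE _ _ _]; have := (PE m).1 Pm i.
by rewrite mE fv_zpt ler0z.
Qed.

Lemma vs_DT m M u i : vs m M u -> (i \in TT m) = (DD M i == 0).
Proof. by case=> _ mE _ _ _; rewrite inT mE fv_zpt intr_eq0. Qed.

Lemma vs_sumT m M u i : vs m M u -> i \in TT m ->
  \sum_(t in TT m) dzz (rho i) (u t) = 1.
Proof.
move=> V iT; have [_ _ _ Hd _] := V.
rewrite (bigD1 i) //= Hd // eqxx big1 ?addr0 // => t /andP[tT ti].
by rewrite Hd // eq_sym (negbTE ti).
Qed.

Lemma vs_edge m M u i t : vs m M u -> t \in TT m -> - DD M i <= dzz (rho i) (u t).
Proof. by case=> _ _ _ _ [_ [_ He]] tT; have := He i t tT; rewrite /DD; lia. Qed.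

Lemma ineq_gen m M u i : vs m M u -> 1 <= (n.+1)%:Z * DD M i + \sum_(t in TT m) dzz (rho i) (u t).
Proof.
move=> V; case: (boolP (i \in TT m)) => iT.
  by rewrite (vs_sumT V iT) (eqP (etrans (esym (vs_DT i V)) iT)) mulr0 add0r.
have D1 : 1 <= DD M i by have := vs_D0 i V; rewrite (vs_DT i V) in iT; lia.
have [_ _ cT _ _] := V.
have : \sum_(t in TT m) (- DD M i) <= \sum_(t in TT m) dzz (rho i) (u t).
  by apply: ler_sum => t tT; exact: (vs_edge i V tT).
rewrite sumr_const cT -mulr_natr; lia.
Qed.

Lemma ineq_good m M u i : vs m M u -> ~ bad m M u i ->
  1 <= n%:Z * DD M i + \sum_(t in TT m) dzz (rho i) (u t).
Proof.
move=> V nb; case: (boolP (i \in TT m)) => iT.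
  by rewrite (vs_sumT V iT) (eqP (etrans (esym (vs_DT i V)) iT)) mulr0 add0r.
have D1 : 1 <= DD M i by have := vs_D0 i V; rewrite (vs_DT i V) in iT; lia.
have /existsP [t0 /andP[t0T ct0]] : [exists t, (t \in TT m) && (dzz (rho i) (u t) != - DD M i)].
  case: (@existsP _ (fun t => (t \in TT m) && (dzz (rho i) (u t) != - DD M i))) => // H; exfalso; apply: nb => t tT.
  case: (eqVneq (dzz (rho i) (u t)) (- DD M i)) => // ne; exfalso; apply: H; exists t; by rewrite tT ne.
have [_ _ cT _ _] := V.
have : \sum_(t in TT m) (- DD M i) + 1 <= \sum_(t in TT m) dzz (rho i) (u t).
  rewrite (bigD1 t0) // [X in _ <= X](bigD1 t0) //= addrAC lerD //.
    by have := vs_edge i V t0T; move: ct0; lia.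
  by apply: ler_sum => t /andP[tT _]; exact: (vs_edge i V tT).
rewrite sumr_const cT -mulr_natr; lia.
Qed.


Lemma bad_D1 m M u i : vs m M u -> bad m M u i -> DD M i = 1.
Proof.
move=> V B; have [_ _ _ _ [_ [Hv _]]] := V.
have E : rho i = (- DD M i) *: \sum_(t in TT m) rho t.
  rewrite {1}(Hv (rho i)) scaler_sumr; apply eq_bigr => t tT.
  by rewrite B.
have Hd : forall j, (DD M i %| rho i ord0 j)%Z.
  move=> j; rewrite E mxE mulNr -mulrN; exact: dvdz_mulr (dvdzz _).
have := Hprim Hd; have := vs_D0 i V => D0.
by rewrite ger0_norm.
Qed.

Lemma lb_poly m M u i (p b : R) x : vs m M u -> bad m M u i ->
  Hpoly rho (offs a p b) x -> (n.+1)%:R * b <= p.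
Proof.
move=> V B Hx; have D1 := bad_D1 V B.
have [_ mE cT _ [Hxe _]] := V.
set Y := fun t => dotz (rho t) (x - p *: m).
have Yb t : t \in TT m -> b <= Y t.
  move=> tT; rewrite /Y dotzB dotzZ (vs_fv0 V tT); have := Hx t; rewrite /offs; lra.
have Ex : x = p *: m + \sum_(t in TT m) Y t *: zpt R (u t).
  by rewrite -Hxe addrC subrK.
have Hi := Hx i; move: Hi; rewrite {1}Ex dotzD dotzZ dotz_sum.
have -> : \sum_(t in TT m) dotz (rho i) (Y t *: zpt R (u t)) = - \sum_(t in TT m) Y t.
  rewrite -sumrN; apply eq_bigr => t tT.
  by rewrite dotzZ dotz_zpt B // D1 mulrN1.
have -> : dotz (rho i) m = 1 - (a i)%:~R.
  have h : dzz (rho i) M = 1 - a i by move: D1; rewrite /DD => <-; ring.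
  by rewrite mE dotz_zpt h intrB.
have : \sum_(t in TT m) b <= \sum_(t in TT m) Y t by apply: ler_sum => t; exact: Yb.
rewrite sumr_const cT /offs => h1 h2; rewrite -mulr_natr in h1.
rewrite -natr1 mulrDl mul1r; nra.
Qed.


Lemma fx_coord (U : 'M[int]_n) (tv : 'rV[int]_n) x k :
  (x *m map_mx (fun k : int => k%:~R) U + zpt R tv) 0 k =
  \sum_j x 0 j * (U j k)%:~R + (tv 0 k)%:~R.
Proof. by rewrite !mxE; congr (_ + _); apply eq_bigr => j _; rewrite mxE. Qed.

Lemma bad_equiv m M u i : vs m M u -> bad m M u i -> lattice_equiv P (simplex R n).
Proof.
move=> V B; have D1 := bad_D1 V B.
have [Vm mE cT Hd [Hx [Hv He]]] := V.
pose tau k := enum_val (cast_ord (esym cT) k).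
have tauT k : tau k \in TT m by exact: enum_valP.
have tau_inj : injective tau.
  by move=> k1 k2 /enum_val_inj /cast_ord_inj.
have sumtau (W : nmodType) (F : 'I_r -> W) : \sum_(k < n) F (tau k) = \sum_(t in TT m) F t.
  by rewrite [RHS]big_enum_val (sum_cast cT).
pose U : 'M[int]_n := \matrix_(j, k) rho (tau k) 0 j.
pose tv : 'rV[int]_n := \row_k a (tau k).
pose W : 'M[int]_n := \matrix_(k, j) u (tau k) 0 j.
have WU : W *m U = 1%:M.
  apply/matrixP => k l; rewrite !mxE.
  have := Hd (tau l) (tau k) (tauT l) (tauT k); rewrite /dzz => H.
  rewrite (inj_eq tau_inj) in H; rewrite eq_sym -H; apply eq_bigr => j _; rewrite !mxE mulrC.
  by [].
have fvm t : t \in TT m -> fv t m = 0 by rewrite inT => /eqP.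
have fE x k : (x *m map_mx (fun k : int => k%:~R) U + zpt R tv) 0 k = fv (tau k) x.
  by rewrite fx_coord /fv /dotz; congr (_ + _); [apply eq_bigr => j _; rewrite mxE mulrC | rewrite mxE].
exists U, tv; split; first by case: (mulmx1_unit WU).
apply/seteqP; split.
  move=> _ [x Px <-]; apply/simplexE; split => [k|].
    by rewrite fE; exact: (PE x).1 Px (tau k).
  under eq_bigr do rewrite fE.
  rewrite (sumtau _ (fun t => fv t x)).
  have Ex : fv i x = 1 - \sum_(t in TT m) fv t x.
    rewrite {1}(_ : x = m + (x - m)); last by rewrite addrC subrK.
    rewrite fvD [X in dotz _ X]Hx dotz_sum.
    have -> : fv i m = 1 by rewrite mE fv_zpt -/(DD M i) D1.
    rewrite -sumrN; congr (_ + _); apply eq_bigr => t tT.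
    by rewrite dotzZ dotz_zpt B // D1 mulrN1 fvB fvm // subr0.
  have := (PE x).1 Px i; rewrite Ex; lra.
move=> z /simplexE [z0 z1].
set x := m + \sum_(k < n) z 0 k *: zpt R (u (tau k)).
have fvx j : fv j x = fv j m + \sum_(k < n) z 0 k * (dzz (rho j) (u (tau k)))%:~R.
  by rewrite /x fvD dotz_sum; congr (_ + _); apply eq_bigr => k _; rewrite dotzZ dotz_zpt.
exists x.
  apply/PE => j; rewrite fvx mE fv_zpt.
  have -> : (dzz (rho j) M + a j)%:~R + \sum_(k < n) z 0 k * (dzz (rho j) (u (tau k)))%:~R
     = (1 - \sum_k z 0 k) * (DD M j)%:~R + \sum_(k < n) z 0 k * (DD M j + dzz (rho j) (u (tau k)))%:~R.
    rewrite mulrBl mul1r mulr_suml -addrA; congr (_ + _).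
    rewrite -sumrN -big_split; apply eq_bigr => k _ /=; rewrite intrD; ring.
  apply: addr_ge0; first by rewrite mulr_ge0 ?subr_ge0 // ler0z (vs_D0 j V).
  apply: sumr_ge0 => k _; rewrite mulr_ge0 // ler0z.
  by have := He j (tau k) (tauT k); rewrite /DD.
apply/matrixP => o l; rewrite (ord1 o) fE fvx fvm // add0r.
rewrite (bigD1 l) //= Hd // eqxx mulr1 big1 ?addr0 // => k /negbTE kl.
by rewrite Hd // (inj_eq tau_inj) eq_sym kl mulr0.
Qed.


Lemma equiv_bad : (0 < n)%N -> lattice_equiv P (simplex R n) ->
  exists m M u i, vs m M u /\ bad m M u i.
Proof.
move=> n0 [U [tv [Uu Himg]]].
set Ur := map_mx (fun k : int => (k%:~R : R)) U.
pose f x := x *m Ur + zpt R tv.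
have fP x : P x -> simplex R n (f x) by move=> Px; rewrite -Himg; exists x.
have Pf z : simplex R n z -> exists x, P x /\ f x = z.
  by rewrite -Himg => -[x Px <-]; exists x.
pose Wr := map_mx (fun k : int => (k%:~R : R)) (invmx U).
have UW : Ur *m Wr = 1%:M.
  apply/matrixP => i j; rewrite !mxE.
  have := congr1 (fun A : 'M[int]_n => ((A i j)%:~R : R)) (mulmxV Uu).
  rewrite /= !mxE rmorph_sum /= rmorph_nat => <-; apply eq_bigr => k _; rewrite !mxE intrM //.
have finj x y : f x = f y -> x = y.
  move=> /addIr /(congr1 (fun A => A *m Wr)); rewrite -!mulmxA UW !mulmx1.
  by [].
have fD x v : f (x + v) = f x + v *m Ur by rewrite /f mulmxDl addrAC.
have S0 : simplex R n 0.
  by apply/simplexE; split => [k|]; rewrite ?mxE // big1 // => k _; rewrite mxE.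
have [m [Pm fm]] := Pf _ S0.
have Vm : vertex P m.
  split => // x y Px Py Hm.
  have fm' : f x + f y = 0.
    have : f m = 2^-1 *: (f x + f y).
      rewrite Hm /f -scalemxAl mulmxDl [in RHS]addrACA [in RHS]scalerDr; congr (_ + _).
      by rewrite -mulr2n -scaler_nat scalerA mulVf ?pnatr_eq0 // scale1r.
    rewrite fm => /esym /eqP; rewrite scaler_eq0 invr_eq0 pnatr_eq0 /=.
    by move/eqP.
  apply: finj; have [hx _] := (simplexE (f x)).1 (fP _ Px).
  have [hy _] := (simplexE (f y)).1 (fP _ Py).
  apply/matrixP => o k; rewrite (ord1 o).
  have := congr1 (fun A : 'rV[R]_n => A 0 k) fm'; rewrite /= mxE [X in _ = X]mxE => e.
  have := hx k; have := hy k; move: e; lra.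
have [M [u V]] := vertex_struct Vm.
exists m, M, u.
have [_ mE cT Hd [Hx [Hv He]]] := V.
pose G (v : 'rV[R]_n) := \sum_k (v *m Ur) 0 k.
have zU (w : 'rV[int]_n) k : (zpt R w *m Ur) 0 k = ((w *m U) 0 k)%:~R.
  by rewrite !mxE rmorph_sum; apply eq_bigr => j _; rewrite !mxE /= intrM.
have G1 t : t \in TT m -> G (zpt R (u t)) = 1.
  move=> tT; set g := \sum_k (u t *m U) 0 k.
  have Gg : G (zpt R (u t)) = g%:~R by rewrite /G rmorph_sum; apply eq_bigr => k _; rewrite zU.
  have Pmu : P (m + zpt R (u t)).
    apply/PE => j; rewrite fvD mE fv_zpt dotz_zpt -intrD ler0z.
    exact: He.
  have := (simplexE _).1 (fP _ Pmu); rewrite fD fm add0r => -[h0 h1].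
  have g0 : 0 <= g by rewrite -(ler0z R) -Gg; apply: sumr_ge0 => k _; exact: h0.
  have g1 : g <= 1 by rewrite -(lerz1 R) -Gg.
  have gn0 : g != 0.
    apply/eqP => g00.
    have : zpt R (u t) *m Ur = 0.
      apply/matrixP => o k; rewrite (ord1 o) [RHS]mxE.
      have : G (zpt R (u t)) = 0 by rewrite Gg g00.
      move/eqP; rewrite psumr_eq0 => [/allP H|k' _]; last exact: h0.
      by have := H k (mem_index_enum _); rewrite /= => /eqP.
    move/(congr1 (fun A => A *m Wr)); rewrite -mulmxA UW mulmx1 mul0mx => uz.
    have := Hd t t tT tT; rewrite eqxx => h.
    have := dotz_zpt R (rho t) (u t); rewrite uz dotz0 h => /eqP.
    by rewrite eq_sym oner_eq0.
  rewrite Gg; suff -> : g = 1 by []; move: g0 g1 gn0; lia.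
case: (pselect (exists i, bad m M u i)) => [[i Bi]|nB]; first by exists i.
exfalso.
have nbi i : ~ bad m M u i by move=> b; apply: nB; exists i.
set K : R := 1 + \sum_i (DD M i)%:~R.
have DK i : (DD M i)%:~R <= K - 1.
  rewrite /K (addrC 1) addrK (bigD1 i) //= lerDl sumr_ge0 // => j _.
  by rewrite ler0z (vs_D0 j V).
have K1 : 1 <= K by rewrite /K lerDl sumr_ge0 // => j _; rewrite ler0z (vs_D0 j V).
set nR : R := n%:R.
have nR0 : 0 < nR by rewrite /nR ltr0n.
set dl := (nR * K)^-1.
have dl0 : 0 < dl by rewrite /dl invr_gt0 mulr_gt0 //; lra.
set sc := (1 + dl) / nR.
have sc0 : 0 <= sc by rewrite /sc divr_ge0 //; lra.
have e1 : sc * nR = 1 + dl by rewrite /sc mulrVK ?unitfE ?gt_eqF.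
have e4 : sc - dl * K = dl / nR.
  rewrite /sc /dl; have : nR != 0 by rewrite gt_eqF.
  have : K != 0 by rewrite gt_eqF //; lra.
  move=> ? ?; field.
  by apply/andP.
set z := m + sc *: \sum_(t in TT m) zpt R (u t).
have Pz : P z.
  apply/PE => i; rewrite /z fvD dotzZ dotz_sum mE fv_zpt -/(DD M i).
  rewrite (eq_bigr (fun t => (dzz (rho i) (u t))%:~R)) => [|t _]; last by rewrite dotz_zpt.
  rewrite -rmorph_sum /=.
  set C := ((\sum_(t in TT m) dzz (rho i) (u t))%:~R : R).
  set D := ((DD M i)%:~R : R).
  have hC : 1 - nR * D <= C.
    have := ineq_good V (nbi i); rewrite -(ler_int R) intrD intrM /= -/C -/D.
    by rewrite /nR; lra.
  have h1 : sc * (1 - nR * D) <= sc * C by rewrite ler_wpM2l.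
  have h2 : sc * (1 - nR * D) = sc - (1 + dl) * D by rewrite mulrBr mulr1 mulrA e1.
  have D0 : 0 <= D by rewrite ler0z (vs_D0 i V).
  have h3 : dl * D <= dl * (K - 1) by apply: ler_wpM2l; [exact: ltW | exact: DK].
  have h5 : 0 <= dl / nR by rewrite divr_ge0 ?ltW.
  move: h1; rewrite -mE; lra.
have := (simplexE _).1 (fP _ Pz) => -[_].
rewrite /z fD fm add0r -scalemxAl mulmx_suml.
under eq_bigr do rewrite mxE summxE.
rewrite -mulr_sumr exchange_big /=.
rewrite (eq_bigr (fun t => 1)) => [|t tT]; last by rewrite -(G1 t tT).
rewrite sumr_const cT -/nR e1; lra.
Qed.


Lemma spanned_gen : spanned rho (offs a ((n.+1)%:R : R) 0) (1 : R).
Proof.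
apply: spanned_suff => [|m M u V i]; first by rewrite ltr0n.
have := ineq_gen i V; rewrite -(ler_int R) rmorphD rmorphM /= mul1r /DD.
by [].
Qed.

Lemma spanned_n : (0 < n)%N -> ~ lattice_equiv P (simplex R n) ->
  spanned rho (offs a (n%:R : R) 0) (1 : R).
Proof.
move=> n0 nE; apply: spanned_suff => [|m M u V i]; first by rewrite ltr0n.
have nb : ~ bad m M u i by move=> B; apply: nE; exact: (bad_equiv V B).
have := ineq_good V nb; rewrite -(ler_int R) rmorphD rmorphM /= mul1r /DD.
by [].
Qed.

Lemma P_vertex : (exists x, P x) -> exists m, vertex P m.
Proof.
case=> x Px; case: Hlat => k [V PE']; rewrite PE' in Px *.
case: k V Px {PE'} => [|k] V Px; last exact: conv_vertex_exists.
by case: Px => l [_ [l1 _]]; move: l1; rewrite big_ord0 => /eqP; rewrite eq_sym oner_eq0.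
Qed.


Local Open Scope classical_set_scope.
Lemma main_result : (0 < n)%N -> (exists x, P x) ->
  ((codeg R rho a = n.+1%:R /\ codegQ R rho a = n.+1%:R /\ tau R rho a = n.+1%:R)
     <-> lattice_equiv P (simplex R n)) /\
  (~ lattice_equiv P (simplex R n) ->
     codegQ R rho a <= tau R rho a /\ tau R rho a <= n%:R).
Proof.
move=> n0 Hne.
pose Sq := [set q : R | exists p b : nat, (0 < p)%N /\ (0 < b)%N /\ q = p%:R / b%:R /\
        exists x : 'rV[R]_n, Hpoly rho (offs a p%:R b%:R) x].
pose St := [set q : R | exists p b : nat, (0 < p)%N /\ (0 < b)%N /\ q = p%:R / b%:R /\
        spanned rho (offs a (p%:R : R) 0) (b%:R : R)].
pose Sd := [set q : R | exists k : nat, q = k%:R /\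
        exists z : 'rV[int]_n, Hpoly rho (offs a k%:R 1) (zpt R z)].
have -> : codeg R rho a = inf Sd by [].
have -> : codegQ R rho a = inf Sq by [].
have -> : tau R rho a = inf St by [].
have lbSq : has_lbound Sq.
  by exists 0 => y [p [b [_ [_ [-> _]]]]]; rewrite divr_ge0.
have lbSt : has_lbound St.
  by exists 0 => y [p [b [_ [_ [-> _]]]]]; rewrite divr_ge0.
have lbSd : has_lbound Sd by exists 0 => y [k [-> _]].
have [m0 Vm0] := P_vertex Hne.
have [M0 [u0 V0]] := vertex_struct Vm0.
have StSq : St `<=` Sq.
  move=> y [p [b [p0 [b0 [-> Sp]]]]]; exists p, b; do 3!split => //.
  by exists (ystar m0 u0 p%:R b%:R); apply: spanned_nec V0 => //; rewrite ltr0n.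
have qt : (exists y, St y) -> inf Sq <= inf St.
  move=> ne; apply: lb_le_inf => // y Sy; exact: ge_inf lbSq _ (StSq _ Sy).
have n1St : St n.+1%:R.
  by exists n.+1, 1%N; do 3!split => //; [rewrite divr1 | exact: spanned_gen].
have part2 : ~ lattice_equiv P (simplex R n) -> inf Sq <= inf St /\ inf St <= n%:R.
  move=> nE; have nSt : St n%:R.
    by exists n, 1%N; do 3!split => //; [rewrite divr1 | exact: spanned_n].
  split; first by apply: qt; exists n%:R.
  exact: ge_inf lbSt _ nSt.
split => //; split.
  case=> _ [_ ht]; case: (pselect (lattice_equiv P (simplex R n))) => // nE.
  have [_ h] := part2 nE; move: h; rewrite ht ler_nat ltnn.
  by [].
move=> E; have [m [M [u [i [V B]]]]] := equiv_bad n0 E.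
have lbq y : Sq y -> n.+1%:R <= y.
  move=> [p [b [p0 [b0 [-> [x Hx]]]]]].
  have := lb_poly V B Hx; rewrite ler_pdivlMr ?ltr0n //.
have lbt y : St y -> n.+1%:R <= y by move=> /StSq; exact: lbq.
have lbd y : Sd y -> n.+1%:R <= y.
  move=> [k [-> [z Hz]]]; have := lb_poly V B Hz; rewrite mulr1.
  by [].
have n1Sq : Sq n.+1%:R by exact: StSq.
have n1Sd : Sd n.+1%:R.
  exists n.+1; split => //.
  exists ((n.+1)%:Z *: M + \sum_(t in TT m) u t).
  have := spanned_nec (ltr0Sn _ _) spanned_gen V.
  have [_ mE _ _ _] := V.
  rewrite /ystar zptD zptZ zpt_sum -mE scale1r.
  by [].
split; [|split]; apply: le_anti; apply/andP; split.
- exact: ge_inf lbSd _ n1Sd.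
- by apply: lb_le_inf; [exists n.+1%:R | exact: lbd].
- exact: ge_inf lbSq _ n1Sq.
- by apply: lb_le_inf; [exists n.+1%:R | exact: lbq].
- exact: ge_inf lbSt _ n1St.
- by apply: lb_le_inf; [exists n.+1%:R | exact: lbt].
Qed.

End Main.

Theorem corollary2p3 (R : realType) (n r : nat) (rho : 'I_r -> 'rV[int]_n)
    (a : 'I_r -> int) :
  (0 < n)%N ->
  facet_presentation R rho a ->
  full_dim R rho a ->
  lattice_polytope (Ppoly R rho a) ->
  smooth R rho a ->
  ((codeg R rho a = n.+1%:R /\ codegQ R rho a = n.+1%:R /\ tau R rho a = n.+1%:R)
     <-> lattice_equiv (Ppoly R rho a) (simplex R n)) /\
  (~ lattice_equiv (Ppoly R rho a) (simplex R n) ->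
     codegQ R rho a <= tau R rho a /\ tau R rho a <= n%:R).
Proof.
move=> n0 [Hprim _] [x Hx] Hlat Hsm.
apply: main_result => //; exists x; apply/PE => i.
by have := Hx i; rewrite /fv; lra.
Qed.
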